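(* (Preservation) If $\vdash\mathtt M:\mathsf{Idx}$ is derivable and $\mathtt M\Downarrow^1\mathtt N$, then $\vdash\mathtt N:\mathsf{Idx}$ is derivable. (Progress) If $\vdash\mathtt M:\mathsf{Idx}$ is derivable and $\mathtt M\Downarrow^1\mathtt N$, then $\mathtt N$ is a numeral $\underline n$.
   Context: qPCF. Gates: $\mathcal U=\bigcup_k\mathcal U(k)$, $\mathtt U\in\mathcal U(k)$ acts on $k+1$ qubits; $\ddagger$ is a fixed total arity-preserving map on gate names. Raw terms: $\mathtt{M},\mathtt{N},\mathtt{P},\mathtt{Q},\mathtt{E}::=\mathtt{x}\mid\lambda\mathtt{x}^\sigma.\mathtt{M}\mid\mathtt{M}\mathtt{N}\mid\underline{n}\mid\mathtt{pred}\mid\mathtt{succ}\mid\mathtt{if}\mid\mathtt{Y}_\sigma\mid\mathtt{set}\mid\mathtt{get}\mid\mathtt{U}\mid{::}\mid{\parallel}\mid\mathtt{iter}\mid\mathtt{reverse}\mid\odot\mathtt{E}\mathtt{E}'\ (\odot\in\{+,*\})\mid\mathtt{size}\mid\mathtt{dMeas}$, with infix $::$, $\parallel$, $+$. Types $\sigma::=\mathsf{Nat}\mid\mathsf{Idx}\mid\mathsf{Circ}(\mathtt E)\mid\Pi\mathtt x^\sigma.\tau$; $\sigma\to\tau$ is a non-dependent $\Pi$. Bases $B$: finite variable-to-type assignments with distinct variables. $\mathrm{sC}(B,\mathsf{Nat})=\mathrm{sC}(B,\mathsf{Idx})=\emptyset$, $\mathrm{sC}(B,\mathsf{Circ}(\mathtt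 E))=\{B\vdash\mathtt E:\mathsf{Idx}\}$, $\mathrm{sC}(B,\Pi\mathtt x^\sigma.\tau)=\mathrm{sC}(B,\sigma)\cup\mathrm{sC}(B\cup\{\mathtt x:\sigma\},\tau)$, extended to sets by union; $\mathrm{WF}(B,S)$ means all typings in $\mathrm{sC}(B,S)$ are derivable. Typing rules: (P0) $\mathrm{WF}(B,\mathrm{codom}(B)\cup\{\sigma\})\Rightarrow B\cup\{\mathtt x:\sigma\}\vdash\mathtt x:\sigma$; (P1) $B\cup\{\mathtt x:\sigma\}\vdash\mathtt N:\tau\Rightarrow B\vdash\lambda\mathtt x^\sigma.\mathtt N:\Pi\mathtt x^\sigma.\tau$; (P2) $B\vdash\mathtt P:\Pi\mathtt x^\sigma.\tau$, $B\vdash\mathtt Q:\sigma\Rightarrow B\vdash\mathtt{PQ}:\tau[\mathtt Q/\mathtt x]$; given $\mathrm{WF}(B,\mathrm{codom}(B))$: $\mathtt{succ},\mathtt{pred}:\mathsf{Nat}\to\mathsf{Nat}$, $\mathtt{if}:\mathsf{Nat}\to\mathsf{Nat}\to\mathsf{Nat}\to\mathsf{Nat}$, $\mathtt{get},\mathtt{set}:\mathsf{Nat}\to\mathsf{Nat}\to\mathsf{Nat}$, $\underline n:\mathsf{Idx}$, $\mathtt U:\mathsf{Circ}(\underline k)$ for $\mathtt U\in\mathcal U(k)$; (P5') $B\vdash\mathtt E:\mathsf{Idx}\Rightarrow B\vdash\mathtt{if}:\mathsf{Nat}\to\mathsf{Circ}(\mathtt E)\to\mathsf{Circ}(\mathtt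 E)\to\mathsf{Circ}(\mathtt E)$; (P6) $\sigma=\tau_1\to\cdots\to\tau_n\to\gamma$, $\gamma\in\{\mathsf{Nat},\mathsf{Circ}(\mathtt E)\}$, $\mathrm{WF}(B,\mathrm{codom}(B)\cup\{\sigma\})\Rightarrow B\vdash\mathtt Y_\sigma:(\sigma\to\sigma)\to\sigma$; (I0) $B\vdash\mathtt M:\mathsf{Idx}\Rightarrow B\vdash\mathtt M:\mathsf{Nat}$; (I2) $B\vdash\mathtt E_0,\mathtt E_1:\mathsf{Idx}\Rightarrow B\vdash\odot\mathtt E_0\mathtt E_1:\mathsf{Idx}$; (I3) $B\vdash\mathtt M:\mathsf{Circ}(\mathtt E)\Rightarrow B\vdash\mathtt{size}\,\mathtt M:\mathsf{Idx}$; given $B\vdash\mathtt E,\mathtt E_0,\mathtt E_1:\mathsf{Idx}$: ${::}:\mathsf{Circ}(\mathtt E)\to\mathsf{Circ}(\mathtt E)\to\mathsf{Circ}(\mathtt E)$, ${\parallel}:\mathsf{Circ}(\mathtt E_0)\to\mathsf{Circ}(\mathtt E_1)\to\mathsf{Circ}(\mathtt E_0+\mathtt E_1+\underline1)$, $\mathtt{reverse}:\mathsf{Circ}(\mathtt E)\to\mathsf{Circ}(\mathtt E)$, $\mathtt{iter}:\Pi\mathtt x^{\mathsf{Idx}}.\mathsf{Circ}(\mathtt E_0)\to\mathsf{Circ}(\mathtt E_1)\to\mathsf{Circ}(\mathtt E_0+((\underline1+\mathtt E_1)*\mathtt x))$, $\mathtt{dMeas}:\mathsf{Nat}\to\mathsf{Circ}(\mathtt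 E)\to\mathsf{Nat}$. Types are identified modulo $\alpha$, $\beta$-convertibility of terms in types, and ring laws of $+,*$ with $0,1$. Evaluation $\mathtt M\Downarrow^\alpha\mathtt V$ ($\mathtt M$ closed of ground type, $0<\alpha\le1$, $\mathtt V$ a numeral or a term built from gate names with $::,\parallel$) is the big-step call-by-name relation: $\underline n\Downarrow^1\underline n$; $\mathtt{succ}$/$\mathtt{pred}$ evaluate their argument and add/subtract one; $(\lambda\mathtt x.\mathtt M)\mathtt N\vec{\mathtt P}\Downarrow^\alpha\mathtt V$ if $\mathtt M[\mathtt N/\mathtt x]\vec{\mathtt P}\Downarrow^\alpha\mathtt V$; $\mathtt{if}\,\mathtt M\mathtt L\mathtt R\Downarrow^{\alpha\alpha'}\mathtt V$ if $\mathtt M\Downarrow^\alpha\underline0,\mathtt L\Downarrow^{\alpha'}\mathtt V$ or $\mathtt M\Downarrow^\alpha\underline{n+1},\mathtt R\Downarrow^{\alpha'}\mathtt V$; $\mathtt Y\mathtt M\vec{\mathtt P}\Downarrow^\alpha\mathtt V$ if $\mathtt M(\mathtt Y\mathtt M)\vec{\mathtt P}\Downarrow^\alpha\mathtt V$; $\mathtt{size}\,\mathtt M\Downarrow^\alpha\underline n$ if $\vdash\mathtt M:\mathsf{Circ}(\mathtt E)$ and $\mathtt E\Downarrow^\alpha\underline n$; $\odot\mathtt E_0\mathtt E_1\Downarrow^{\alpha\alpha'}\underline{m\odot n}$ if $\mathtt E_0\Downarrow^\alpha\underline m,\mathtt E_1\Downarrow^{\alpha'}\underline n$; $\mathtt{get}\,\mathtt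 M\mathtt N$ / $\mathtt{set}\,\mathtt M\mathtt N$ evaluate both arguments to $\underline m,\underline n$ (probabilities multiplied) and return the $n$-th binary digit of $m$ / $m$ with that digit set to $1$; $\mathtt U\Downarrow^\alpha\mathtt U$; $::$, $\parallel$ evaluate components; $\mathtt{reverse}$ replaces gates by their $\ddagger$-image and reverses sequential order; $\mathtt{iter}\,\mathtt E\mathtt M_0\mathtt M_1\Downarrow\mathtt C_1\parallel\cdots\parallel\mathtt C_1\parallel\mathtt C_0$ ($n$ copies, $\mathtt E\Downarrow\underline n$); $\mathtt{dMeas}\,\mathtt M\mathtt N\Downarrow^{\alpha\alpha'\alpha''}\underline n$ if $\mathtt M\Downarrow^\alpha\underline m$, $\mathtt N\Downarrow^{\alpha'}\mathtt C$, $\vdash\mathtt N:\mathsf{Circ}(\underline k)$ and $\underline n$ is a quantum measurement outcome of the circuit $\mathtt C$ on input $m$, obtained with probability $\alpha''$. *)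

(* Defs.v *)
From Stdlib Require Import Reals List Arith PeanoNat.
Import ListNotations.

Inductive tm (G : Type) : Type :=
| Var : nat -> tm G
| Lam : nat -> ty G -> tm G -> tm G
| App : tm G -> tm G -> tm G
| Num : nat -> tm G
| Pred : tm G
| Succ : tm G
| If : tm G
| Yc : ty G -> tm G
| SetB : tm G
| GetB : tm G
| Gate : G -> tm G
| Seq : tm G
| Par : tm G
| Iter : tm G
| Reverse : tm G
| Plus : tm G -> tm G -> tm G
| Times : tm G -> tm G -> tm G
| Size : tm G
| DMeas : tm G
with ty (G : Type) : Type :=
| TNat : ty G
| TIdx : ty G
| TCirc : tm G -> ty G
| TPi : nat -> ty G -> ty G -> ty G.

Arguments Var {G} _. Arguments Lam {G} _ _ _. Arguments App {G} _ _.
Arguments Num {G} _. Arguments Pred {G}. Arguments Succ {G}. Arguments If {G}.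
Arguments Yc {G} _. Arguments SetB {G}. Arguments GetB {G}. Arguments Gate {G} _.
Arguments Seq {G}. Arguments Par {G}. Arguments Iter {G}. Arguments Reverse {G}.
Arguments Plus {G} _ _. Arguments Times {G} _ _. Arguments Size {G}.
Arguments DMeas {G}.
Arguments TNat {G}. Arguments TIdx {G}. Arguments TCirc {G} _.
Arguments TPi {G} _ _ _.

Fixpoint vars_tm {G} (M : tm G) : list nat :=
  match M with
  | Var x => [x]
  | Lam x s N => x :: vars_ty s ++ vars_tm N
  | App P Q => vars_tm P ++ vars_tm Q
  | Yc s => vars_ty s
  | Plus P Q => vars_tm P ++ vars_tm Q
  | Times P Q => vars_tm P ++ vars_tm Q
  | _ => []
  end
with vars_ty {G} (s : ty G) : list nat :=
  match s with
  | TCirc E => vars_tm E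
  | TPi x a b => x :: vars_ty a ++ vars_ty b
  | _ => []
  end.

Definition drop_var (x : nat) (l : list nat) : list nat :=
  filter (fun y => negb (Nat.eqb y x)) l.

Fixpoint fv_tm {G} (M : tm G) : list nat :=
  match M with
  | Var x => [x]
  | Lam x s N => fv_ty s ++ drop_var x (fv_tm N)
  | App P Q => fv_tm P ++ fv_tm Q
  | Yc s => fv_ty s
  | Plus P Q => fv_tm P ++ fv_tm Q
  | Times P Q => fv_tm P ++ fv_tm Q
  | _ => []
  end
with fv_ty {G} (s : ty G) : list nat :=
  match s with
  | TCirc E => fv_tm E
  | TPi x a b => fv_ty a ++ drop_var x (fv_ty b)
  | _ => []
  end.

Definition fresh (l : list nat) : nat := S (list_max l).

(* ---------- Capture-avoiding simultaneous substitution ----------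
   Bound variables are always renamed to a fresh variable (harmless, since
   terms and types are considered up to alpha-conversion). *)
Fixpoint lookup {G} (env : list (nat * tm G)) (x : nat) : option (tm G) :=
  match env with
  | [] => None
  | (y, N) :: env' => if Nat.eqb x y then Some N else lookup env' x
  end.

Definition env_vars {G} (env : list (nat * tm G)) : list nat :=
  flat_map (fun p => fst p :: vars_tm (snd p)) env.

Fixpoint subst_tm {G} (env : list (nat * tm G)) (M : tm G) : tm G :=
  match M with
  | Var x => match lookup env x with Some N => N | None => Var x end
  | Lam x s N =>
      let z := fresh (x :: vars_tm N ++ env_vars env) in
      Lam z (subst_ty env s) (subst_tm ((x, Var z) :: env) N)
  | App P Q => App (subst_tm env P) (subst_tm env Q)
  | Yc s => Yc (subst_ty env s)
  | Plus P Q => Plus (subst_tm env P) (subst_tm env Q)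
  | Times P Q => Times (subst_tm env P) (subst_tm env Q)
  | Num n => Num n
  | Pred => Pred | Succ => Succ | If => If | SetB => SetB | GetB => GetB
  | Gate U => Gate U | Seq => Seq | Par => Par | Iter => Iter
  | Reverse => Reverse | Size => Size | DMeas => DMeas
  end
with subst_ty {G} (env : list (nat * tm G)) (s : ty G) : ty G :=
  match s with
  | TNat => TNat
  | TIdx => TIdx
  | TCirc E => TCirc (subst_tm env E)
  | TPi x a b =>
      let z := fresh (x :: vars_ty b ++ env_vars env) in
      TPi z (subst_ty env a) (subst_ty ((x, Var z) :: env) b)
  end.

Definition subst1_tm {G} (x : nat) (N : tm G) (M : tm G) := subst_tm [(x, N)] M.
Definition subst1_ty {G} (x : nat) (N : tm G) (s : ty G) := subst_ty [(x, N)] s.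

Definition arrow {G} (s t : ty G) : ty G := TPi (fresh (vars_ty t)) s t.

Inductive conv_tm {G} : tm G -> tm G -> Prop :=
| ct_refl M : conv_tm M M
| ct_sym M N : conv_tm M N -> conv_tm N M
| ct_trans M N P : conv_tm M N -> conv_tm N P -> conv_tm M P
| ct_lam x s s' M M' : conv_ty s s' -> conv_tm M M' -> conv_tm (Lam x s M) (Lam x s' M')
| ct_app M M' N N' : conv_tm M M' -> conv_tm N N' -> conv_tm (App M N) (App M' N')
| ct_Y s s' : conv_ty s s' -> conv_tm (Yc s) (Yc s')
| ct_plus M M' N N' : conv_tm M M' -> conv_tm N N' -> conv_tm (Plus M N) (Plus M' N')
| ct_times M M' N N' : conv_tm M M' -> conv_tm N N' -> conv_tm (Times M N) (Times M' N')
| ct_alpha x y s M : ~ In y (fv_tm M) ->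
    conv_tm (Lam x s M) (Lam y s (subst1_tm x (Var y) M))
| ct_beta x s M N : conv_tm (App (Lam x s M) N) (subst1_tm x N M)
| ct_plusA E F H : conv_tm (Plus E (Plus F H)) (Plus (Plus E F) H)
| ct_plusC E F : conv_tm (Plus E F) (Plus F E)
| ct_plus0 E : conv_tm (Plus (Num 0) E) E
| ct_timesA E F H : conv_tm (Times E (Times F H)) (Times (Times E F) H)
| ct_timesC E F : conv_tm (Times E F) (Times F E)
| ct_times1 E : conv_tm (Times (Num 1) E) E
| ct_times0 E : conv_tm (Times (Num 0) E) (Num 0)
| ct_distr E F H : conv_tm (Times E (Plus F H)) (Plus (Times E F) (Times E H))
| ct_plusN m n : conv_tm (Plus (Num m) (Num n)) (Num (m + n))
| ct_timesN m n : conv_tm (Times (Num m) (Num n)) (Num (m * n))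
with conv_ty {G} : ty G -> ty G -> Prop :=
| cy_refl s : conv_ty s s
| cy_sym s t : conv_ty s t -> conv_ty t s
| cy_trans s t u : conv_ty s t -> conv_ty t u -> conv_ty s u
| cy_circ E E' : conv_tm E E' -> conv_ty (TCirc E) (TCirc E')
| cy_pi x s s' t t' : conv_ty s s' -> conv_ty t t' -> conv_ty (TPi x s t) (TPi x s' t')
| cy_alpha x y s t : ~ In y (fv_ty t) ->
    conv_ty (TPi x s t) (TPi y s (subst1_ty x (Var y) t)).

Definition base (G : Type) := list (nat * ty G).
Definition is_base {G} (B : base G) : Prop := NoDup (map fst B).
Definition remove_var {G} (x : nat) (B : base G) : base G :=
  filter (fun p => negb (Nat.eqb (fst p) x)) B.
(* B u {x : sigma}  (x not in the domain of B, up to alpha-renaming) *)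
Definition update {G} (x : nat) (s : ty G) (B : base G) : base G :=
  (x, s) :: remove_var x B.

Inductive yshape {G} : ty G -> Prop :=
| ys_nat : yshape TNat
| ys_circ E : yshape (TCirc E)
| ys_arr x s t : ~ In x (fv_ty t) -> yshape t -> yshape (TPi x s t).

Definition iter_ty {G} (E0 E1 : tm G) : ty G :=
  let x := fresh (vars_tm E0 ++ vars_tm E1) in
  TPi x TIdx (arrow (TCirc E0) (arrow (TCirc E1)
     (TCirc (Plus E0 (Times (Plus (Num 1) E1) (Var x)))))).

(* ---------- Typing: typ ar B M s  is  B |- M : s ; 
   sct ar B s  is  WF(B, {s}), i.e. all judgements of sC(B, s) derivable.
   ar U = k  means  U \in U(k). *)
Inductive typ {G} (ar : G -> nat) : base G -> tm G -> ty G -> Prop :=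
| T_var B x s : is_base B -> In (x, s) B ->
    (forall t, In t (map snd (remove_var x B)) -> sct ar (remove_var x B) t) ->
    sct ar (remove_var x B) s ->
    typ ar B (Var x) s
| T_lam B x s N t : is_base B -> typ ar (update x s B) N t ->
    typ ar B (Lam x s N) (TPi x s t)
| T_app B P Q x s t : typ ar B P (TPi x s t) -> typ ar B Q s ->
    typ ar B (App P Q) (subst1_ty x Q t)
| T_conv B M s t : typ ar B M s -> conv_ty s t -> typ ar B M t
| T_succ B : is_base B -> (forall t, In t (map snd B) -> sct ar B t) ->
    typ ar B Succ (arrow TNat TNat)
| T_pred B : is_base B -> (forall t, In t (map snd B) -> sct ar B t) ->
    typ ar B Pred (arrow TNat TNat)
| T_if B : is_base B -> (forall t, In t (map snd B) -> sct ar B t) ->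
    typ ar B If (arrow TNat (arrow TNat (arrow TNat TNat)))
| T_get B : is_base B -> (forall t, In t (map snd B) -> sct ar B t) ->
    typ ar B GetB (arrow TNat (arrow TNat TNat))
| T_set B : is_base B -> (forall t, In t (map snd B) -> sct ar B t) ->
    typ ar B SetB (arrow TNat (arrow TNat TNat))
| T_num B n : is_base B -> (forall t, In t (map snd B) -> sct ar B t) ->
    typ ar B (Num n) TIdx
| T_gate B U : is_base B -> (forall t, In t (map snd B) -> sct ar B t) ->
    typ ar B (Gate U) (TCirc (Num (ar U)))
| T_ifc B E : typ ar B E TIdx ->
    typ ar B If (arrow TNat (arrow (TCirc E) (arrow (TCirc E) (TCirc E))))
| T_Y B s : is_base B -> (forall t, In t (map snd B) -> sct ar B t) ->
    sct ar B s -> yshape s ->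
    typ ar B (Yc s) (arrow (arrow s s) s)
| T_idx B M : typ ar B M TIdx -> typ ar B M TNat
| T_plus B E0 E1 : typ ar B E0 TIdx -> typ ar B E1 TIdx -> typ ar B (Plus E0 E1) TIdx
| T_times B E0 E1 : typ ar B E0 TIdx -> typ ar B E1 TIdx -> typ ar B (Times E0 E1) TIdx
| T_size B M E : typ ar B M (TCirc E) -> typ ar B (App Size M) TIdx
| T_seq B E : typ ar B E TIdx ->
    typ ar B Seq (arrow (TCirc E) (arrow (TCirc E) (TCirc E)))
| T_par B E0 E1 : typ ar B E0 TIdx -> typ ar B E1 TIdx ->
    typ ar B Par (arrow (TCirc E0) (arrow (TCirc E1) (TCirc (Plus (Plus E0 E1) (Num 1)))))
| T_rev B E : typ ar B E TIdx -> typ ar B Reverse (arrow (TCirc E) (TCirc E))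
| T_iter B E0 E1 : typ ar B E0 TIdx -> typ ar B E1 TIdx -> typ ar B Iter (iter_ty E0 E1)
| T_dmeas B E : typ ar B E TIdx -> typ ar B DMeas (arrow TNat (arrow (TCirc E) TNat))
with sct {G} (ar : G -> nat) : base G -> ty G -> Prop :=
| S_nat B : sct ar B TNat
| S_idx B : sct ar B TIdx
| S_circ B E : typ ar B E TIdx -> sct ar B (TCirc E)
| S_pi B x s t : sct ar B s -> sct ar (update x s B) t -> sct ar B (TPi x s t).

Fixpoint apps {G} (M : tm G) (Ps : list (tm G)) : tm G :=
  match Ps with [] => M | P :: Ps' => apps (App M P) Ps' end.

Fixpoint crev {G} (dag : G -> G) (C : tm G) : tm G :=
  match C with
  | Gate U => Gate (dag U)
  | App (App Seq C1) C2 => App (App Seq (crev dag C2)) (crev dag C1)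
  | App (App Par C1) C2 => App (App Par (crev dag C1)) (crev dag C2)
  | _ => C
  end.

Fixpoint iterpar {G} (n : nat) (C1 C0 : tm G) : tm G :=
  match n with
  | 0 => C0
  | S n' => App (App Par C1) (iterpar n' C1 C0)
  end.

(* meas k C m n p : n is a measurement outcome of the circuit value C
   (on k+1 qubits) run on input m, obtained with probability p. *)
Inductive eval {G} (ar : G -> nat) (dag : G -> G)
    (meas : nat -> tm G -> nat -> nat -> R -> Prop) : tm G -> R -> tm G -> Prop :=
| E_num n : eval ar dag meas (Num n) 1%R (Num n)
| E_succ M a n : eval ar dag meas M a (Num n) ->
    eval ar dag meas (App Succ M) a (Num (S n))
| E_pred M a n : eval ar dag meas M a (Num n) ->
    eval ar dag meas (App Pred M) a (Num (Nat.pred n))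
| E_beta x s M N Ps a V : eval ar dag meas (apps (subst1_tm x N M) Ps) a V ->
    eval ar dag meas (apps (App (Lam x s M) N) Ps) a V
| E_if0 M L Rt a a' V : eval ar dag meas M a (Num 0) -> eval ar dag meas L a' V ->
    eval ar dag meas (apps If [M; L; Rt]) (a * a')%R V
| E_ifS M L Rt a a' n V : eval ar dag meas M a (Num (S n)) -> eval ar dag meas Rt a' V ->
    eval ar dag meas (apps If [M; L; Rt]) (a * a')%R V
| E_Y s M Ps a V : eval ar dag meas (apps (App M (App (Yc s) M)) Ps) a V ->
    eval ar dag meas (apps (App (Yc s) M) Ps) a V
| E_size M E a n : typ ar [] M (TCirc E) -> eval ar dag meas E a (Num n) ->
    eval ar dag meas (App Size M) a (Num n)
| E_plus E0 E1 a a' m n : eval ar dag meas E0 a (Num m) -> eval ar dag meas E1 a' (Num n) ->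
    eval ar dag meas (Plus E0 E1) (a * a')%R (Num (m + n))
| E_times E0 E1 a a' m n : eval ar dag meas E0 a (Num m) -> eval ar dag meas E1 a' (Num n) ->
    eval ar dag meas (Times E0 E1) (a * a')%R (Num (m * n))
| E_get M N a a' m n : eval ar dag meas M a (Num m) -> eval ar dag meas N a' (Num n) ->
    eval ar dag meas (App (App GetB M) N) (a * a')%R (Num (Nat.b2n (Nat.testbit m n)))
| E_set M N a a' m n : eval ar dag meas M a (Num m) -> eval ar dag meas N a' (Num n) ->
    eval ar dag meas (App (App SetB M) N) (a * a')%R (Num (Nat.setbit m n))
| E_gate U : eval ar dag meas (Gate U) 1%R (Gate U)
| E_seq M N a a' C C' : eval ar dag meas M a C -> eval ar dag meas N a' C' ->
    eval ar dag meas (App (App Seq M) N) (a * a')%R (App (App Seq C) C')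
| E_par M N a a' C C' : eval ar dag meas M a C -> eval ar dag meas N a' C' ->
    eval ar dag meas (App (App Par M) N) (a * a')%R (App (App Par C) C')
| E_rev M a C : eval ar dag meas M a C ->
    eval ar dag meas (App Reverse M) a (crev dag C)
| E_iter E M0 M1 a a' a'' n C0 C1 :
    eval ar dag meas E a (Num n) -> eval ar dag meas M0 a' C0 -> eval ar dag meas M1 a'' C1 ->
    eval ar dag meas (apps Iter [E; M0; M1]) (a * a' * a'')%R (iterpar n C1 C0)
| E_dmeas M N a a' a'' m k C n :
    eval ar dag meas M a (Num m) -> eval ar dag meas N a' C ->
    typ ar [] N (TCirc (Num k)) -> meas k C m n a'' -> (0 < a'' <= 1)%R ->
    eval ar dag meas (App (App DMeas M) N) (a * a' * a'')%R (Num n).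

(* Main.v *)
Require Import Defs.
From Stdlib Require Import Reals List.
From Stdlib Require Import Arith Lia FunctionalExtensionality.
Import ListNotations.

Section Simple.
Variable G : Type.

Inductive sk := SN | SI | SC | SArr (a b : sk).

Fixpoint skel (s : ty G) : sk :=
  match s with TNat => SN | TIdx => SI | TCirc _ => SC
  | TPi _ a b => SArr (skel a) (skel b) end.

Fixpoint noI (s : sk) : Prop :=
  match s with SI => False | SArr _ b => noI b | _ => True end.

Definition ext (g : nat -> option sk) x A : nat -> option sk :=
  fun y => if Nat.eqb y x then Some A else g y.

Inductive cty : tm G -> sk -> Prop :=
| c_succ : cty Succ (SArr SN SN)
| c_pred : cty Pred (SArr SN SN)
| c_if1 : cty If (SArr SN (SArr SN (SArr SN SN)))
| c_if2 : cty If (SArr SN (SArr SC (SArr SC SC)))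
| c_get : cty GetB (SArr SN (SArr SN SN))
| c_set : cty SetB (SArr SN (SArr SN SN))
| c_gate U : cty (Gate U) SC
| c_seq : cty Seq (SArr SC (SArr SC SC))
| c_par : cty Par (SArr SC (SArr SC SC))
| c_rev : cty Reverse (SArr SC SC)
| c_iter : cty Iter (SArr SI (SArr SC (SArr SC SC)))
| c_dmeas : cty DMeas (SArr SN (SArr SC SN))
| c_size : cty Size (SArr SC SI).

Inductive stype : (nat -> option sk) -> tm G -> sk -> Prop :=
| s_var g x A : g x = Some A -> stype g (Var x) A
| s_lam g x s N B : stype (ext g x (skel s)) N B -> stype g (Lam x s N) (SArr (skel s) B)
| s_app g P Q A B : stype g P (SArr A B) -> stype g Q A -> stype g (App P Q) B
| s_sub g M : stype g M SI -> stype g M SN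
| s_num g n : stype g (Num n) SI
| s_const g c A : cty c A -> stype g c A
| s_Y g s : noI (skel s) -> stype g (Yc s) (SArr (SArr (skel s) (skel s)) (skel s))
| s_plus g P Q : stype g P SI -> stype g Q SI -> stype g (Plus P Q) SI
| s_times g P Q : stype g P SI -> stype g Q SI -> stype g (Times P Q) SI.

Scheme tm_mut := Induction for tm Sort Prop with ty_mut := Induction for ty Sort Prop.

Lemma fv_vars : (forall M : tm G, forall y, In y (fv_tm M) -> In y (vars_tm M)) /\
                (forall s : ty G, forall y, In y (fv_ty s) -> In y (vars_ty s)).
Proof.
  split; [apply (tm_mut G (fun M => forall y, In y (fv_tm M) -> In y (vars_tm M))
                      (fun s => forall y, In y (fv_ty s) -> In y (vars_ty s)))
        | apply (ty_mut G (fun M => forall y, In y (fv_tm M) -> In y (vars_tm M))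
                      (fun s => forall y, In y (fv_ty s) -> In y (vars_ty s)))];
  intros; simpl in *; repeat rewrite in_app_iff in *; unfold drop_var in *;
       repeat rewrite filter_In in *; firstorder.
Qed.

Lemma in_le_max x l : In x l -> x <= list_max l.
Proof. induction l; simpl; intros H; [contradiction|]. destruct H; subst; [lia|].
  specialize (IHl H); lia. Qed.

Lemma fresh_not_in l : ~ In (fresh l) l.
Proof. intros H. apply in_le_max in H. unfold fresh in H. lia. Qed.

Lemma lookup_vars (env : list (nat * tm G)) y N w :
  lookup env y = Some N -> In w (vars_tm N) -> In w (env_vars env).
Proof.
  induction env as [|[a b] env IH]; simpl; [discriminate|].
  intros H1 H2. destruct (Nat.eqb y a).
  - inversion H1; subst. right. apply in_or_app. left; auto.
  - right. apply in_or_app. right. auto.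
Qed.

Lemma skel_subst : forall s env, skel (subst_ty env s) = skel s.
Proof. induction s; intros; simpl; auto. rewrite IHs1, IHs2; auto. Qed.

Lemma conv_skel s t : conv_ty s t -> skel s = skel t.
Proof.
  induction 1; simpl; try congruence.
  unfold subst1_ty; rewrite skel_subst; auto.
Qed.

Lemma weaken g M A : stype g M A -> forall d, (forall y, In y (fv_tm M) -> g y = d y) -> stype d M A.
Proof.
  induction 1; intros d Hd; simpl in *.
  - apply s_var. rewrite <- Hd; auto.
  - apply s_lam. apply IHstype. intros y Hy. unfold ext.
    destruct (Nat.eqb y x) eqn:E; auto. apply Hd. apply in_or_app. right.
    unfold drop_var. apply filter_In. rewrite E. auto.
  - eapply s_app; [apply IHstype1 | apply IHstype2]; intros; apply Hd; apply in_or_app; auto.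
  - apply s_sub; auto.
  - apply s_num.
  - apply s_const; auto.
  - apply s_Y; auto.
  - apply s_plus; [apply IHstype1 | apply IHstype2]; intros; apply Hd; apply in_or_app; auto.
  - apply s_times; [apply IHstype1 | apply IHstype2]; intros; apply Hd; apply in_or_app; auto.
Qed.

Definition substvar (env : list (nat * tm G)) y :=
  match lookup env y with Some N => N | None => Var y end.

Lemma subst_lemma g M A : stype g M A -> forall d env,
  (forall y T, In y (fv_tm M) -> g y = Some T -> stype d (substvar env y) T) ->
  stype d (subst_tm env M) A.
Proof.
  induction 1; intros d env Hd; simpl in *.
  - apply (Hd x A); auto.
  - rewrite <- (skel_subst s env). apply s_lam. rewrite skel_subst.
    set (z := fresh (x :: vars_tm N ++ env_vars env)).
    assert (Hz := fresh_not_in (x :: vars_tm N ++ env_vars env)). fold z in Hz.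
    apply IHstype. intros y T Hy HT. unfold substvar; simpl. unfold ext in HT.
    destruct (Nat.eqb y x) eqn:E.
    + inversion HT; subst. apply s_var. unfold ext. rewrite Nat.eqb_refl; auto.
    + fold (substvar env y). apply weaken with d.
      * apply (Hd y T); auto. apply in_or_app; right. unfold drop_var. apply filter_In.
        rewrite E; auto.
      * intros w Hw. unfold ext. destruct (Nat.eqb w z) eqn:E2; auto.
        apply Nat.eqb_eq in E2; subst w. exfalso. apply Hz. right. apply in_or_app.
        unfold substvar in Hw. destruct (lookup env y) eqn:L.
        -- right. eapply lookup_vars; eauto. apply (proj1 fv_vars); auto.
        -- simpl in Hw. destruct Hw as [Hw|[]]. left. rewrite <- Hw. apply (proj1 fv_vars); auto.
  - eapply s_app; [apply IHstype1 | apply IHstype2]; intros; eapply Hd; eauto; apply in_or_app; auto.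
  - apply s_sub; auto.
  - apply s_num.
  - destruct H; simpl; apply s_const; constructor.
  - rewrite <- (skel_subst s env). apply s_Y. rewrite skel_subst; auto.
  - apply s_plus; [apply IHstype1 | apply IHstype2]; intros; eapply Hd; eauto; apply in_or_app; auto.
  - apply s_times; [apply IHstype1 | apply IHstype2]; intros; eapply Hd; eauto; apply in_or_app; auto.
Qed.

Lemma app_inv g P Q B : stype g (App P Q) B -> exists A B', stype g P (SArr A B') /\
  stype g Q A /\ (B' = B \/ (B' = SI /\ B = SN)).
Proof.
  intro H; remember (App P Q) as M; induction H; inversion HeqM; subst.
  - exists A, B; auto.
  - destruct (IHstype eq_refl) as (A & B' & H1 & H2 & [H3|[H3 H4]]); [|discriminate].
    exists A, B'; auto.
  - inversion H.
Qed.

Lemma lam_inv g x s N T : stype g (Lam x s N) T -> exists B, T = SArr (skel s) B /\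
  stype (ext g x (skel s)) N B.
Proof.
  intro H; remember (Lam x s N) as M; induction H; inversion HeqM; subst.
  - eauto.
  - destruct (IHstype eq_refl) as (B & H1 & _); discriminate.
  - inversion H.
Qed.

Lemma beta_sr g x s M N T : stype g (App (Lam x s M) N) T -> stype g (subst1_tm x N M) T.
Proof.
  intro H. apply app_inv in H as (A & B' & H1 & H2 & H3).
  apply lam_inv in H1 as (B & E & H4). inversion E; subst.
  assert (stype g (subst1_tm x N M) B).
  { unfold subst1_tm. eapply subst_lemma; eauto. intros y T' Hy HT.
    unfold substvar; simpl. unfold ext in HT. destruct (Nat.eqb y x).
    - inversion HT; subst; auto.
    - apply s_var; auto. }
  destruct H3 as [<-|[-> ->]]; auto. apply s_sub; auto.
Qed.

Lemma apps_cong g : forall Ps H H', (forall T, stype g H T -> stype g H' T) ->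
  forall T, stype g (apps H Ps) T -> stype g (apps H' Ps) T.
Proof.
  induction Ps as [|a Ps IH]; simpl; intros H H' HH; auto.
  apply IH. intros T HT. apply app_inv in HT as (A & B' & H1 & H2 & H3).
  assert (stype g (App H' a) B') by (eapply s_app; eauto).
  destruct H3 as [<-|[-> ->]]; auto. apply s_sub; auto.
Qed.

Definition isHead (M : tm G) : Prop :=
  match M with If | Seq | Par | Reverse | Iter | Gate _ | Yc _ | Succ | Pred
  | GetB | SetB | DMeas => True | _ => False end.

Lemma head_noI g M T : stype g M T -> isHead M -> noI T.
Proof.
  induction 1; simpl; intros Hh; try contradiction.
  - exact I.
  - destruct H; simpl in *; auto.
  - auto.
Qed.

Lemma apps_noI g : forall Ps H, (forall T, stype g H T -> noI T) ->
  forall T, stype g (apps H Ps) T -> noI T.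
Proof.
  induction Ps as [|a Ps IH]; simpl; intros H HH; auto.
  apply IH. intros T HT. apply app_inv in HT as (A & B' & H1 & H2 & H3).
  apply HH in H1. simpl in H1. destruct H3 as [<-|[-> ->]]; simpl in *; tauto.
Qed.

Lemma headapps g H Ps : isHead H -> stype g (apps H Ps) SI -> False.
Proof.
  intros Hh HT. apply (apps_noI g Ps H) in HT; auto.
  intros; eapply head_noI; eauto.
Qed.

Lemma inv ar dag meas M a V : eval ar dag meas M a V -> forall g, stype g M SI ->
  exists n, V = Num n.
Proof.
  induction 1; intros g HT; try (eexists; reflexivity).
  - apply (IHeval g). eapply apps_cong; [|exact HT]. intros; eapply beta_sr; eauto.
  - exfalso; eapply (headapps g If); simpl; eauto.
  - exfalso; eapply (headapps g If); simpl; eauto.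
  - exfalso; apply (headapps g (Yc s) (M :: Ps)); simpl; auto.
  - exfalso; apply (headapps g (Gate U) []); simpl; auto.
  - exfalso; apply (headapps g Seq [M; N]); simpl; auto.
  - exfalso; apply (headapps g Par [M; N]); simpl; auto.
  - exfalso; apply (headapps g Reverse [M]); simpl; auto.
  - exfalso; eapply (headapps g Iter); simpl; eauto.
Qed.

Fixpoint bassoc (B : base G) x : option (ty G) :=
  match B with [] => None | (y, s) :: B' => if Nat.eqb x y then Some s else bassoc B' x end.

Definition sctx (B : base G) : nat -> option sk := fun x => option_map skel (bassoc B x).

Lemma bassoc_in B x s : NoDup (map fst B) -> In (x, s) B -> bassoc B x = Some s.
Proof.
  induction B as [|[y t] B IH]; simpl; intros ND Hin; [contradiction|].
  inversion ND; subst. destruct (Nat.eqb x y) eqn:E.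
  - apply Nat.eqb_eq in E; subst. destruct Hin as [Hin|Hin]; [inversion Hin; auto|].
    exfalso. apply H1. change y with (fst (y, s)). apply in_map; auto.
  - destruct Hin as [Hin|Hin]; [inversion Hin; subst; rewrite Nat.eqb_refl in E; discriminate|].
    auto.
Qed.

Lemma bassoc_remove B x y : bassoc (remove_var x B) y = if Nat.eqb y x then None else bassoc B y.
Proof.
  induction B as [|[a t] B IH]; simpl.
  - destruct (Nat.eqb y x); auto.
  - destruct (Nat.eqb a x) eqn:E; simpl.
    + apply Nat.eqb_eq in E; subst. rewrite IH. destruct (Nat.eqb y x); auto.
    + rewrite IH. destruct (Nat.eqb y x) eqn:E2, (Nat.eqb y a) eqn:E3; auto.
      apply Nat.eqb_eq in E2; apply Nat.eqb_eq in E3; subst. rewrite Nat.eqb_refl in E; discriminate.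
Qed.

Lemma sctx_update x s B : sctx (update x s B) = ext (sctx B) x (skel s).
Proof.
  apply functional_extensionality; intro y. unfold sctx, ext, update; simpl.
  rewrite bassoc_remove. destruct (Nat.eqb y x); auto.
Qed.

Lemma yshape_noI s : yshape s -> noI (skel s).
Proof. induction 1; simpl; auto. Qed.

Lemma erase ar B M s : typ ar B M s -> stype (sctx B) M (skel s).
Proof.
  induction 1; unfold arrow, iter_ty in *; simpl in *;
    try (apply s_const; constructor).
  - apply s_var. unfold sctx. rewrite (bassoc_in B x s); auto.
  - apply s_lam. rewrite <- sctx_update; auto.
  - unfold subst1_ty; rewrite skel_subst. eapply s_app; eauto.
  - rewrite <- (conv_skel s t); auto.
  - apply s_num.
  - apply s_Y. apply yshape_noI; auto.
  - apply s_sub; auto.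
  - apply s_plus; auto.
  - apply s_times; auto.
  - eapply s_app; [apply s_const; constructor | eauto].
Qed.

End Simple.

Theorem corollary2 (G : Type) (ar : G -> nat) (dag : G -> G)
  (Hdag : forall U : G, ar (dag U) = ar U)
  (meas : nat -> tm G -> nat -> nat -> R -> Prop)
  (M N : tm G) :
  typ ar nil M TIdx ->
  eval ar dag meas M 1%R N ->
  typ ar nil N TIdx /\ exists n : nat, N = Num n.
Proof.
  intros HT HE. apply erase in HT. simpl in HT.
  destruct (inv G ar dag meas M 1%R N HE _ HT) as [n ->].
  split; eauto. constructor; [constructor | intros t []].
Qed.
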